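(* Let $\mathcal T$ be an atomic orbital category. For all unital $\mathcal T$-weak indexing systems $\mathcal C,\mathcal D$, we have $\nabla(\mathcal C\vee\mathcal D)=\nabla(\mathcal C)\cup\nabla(\mathcal D)$.
   Context: For a small category $\mathcal T$, $\mathbb F_{\mathcal T}$ is the full subcategory of $\mathrm{Fun}(\mathcal T^{op},\mathrm{Set})$ on finite coproducts of representables; $\mathcal T$ is orbital if $\mathbb F_{\mathcal T}$ has pullbacks, and atomic if every morphism of $\mathcal T$ admitting a section is an isomorphism. $\mathbb F_V:=\mathbb F_{\mathcal T,/V}$, $*_V$ terminal, $n\cdot S$ the $n$-fold coproduct; for $U\to V$, $\mathrm{Res}^V_U$ is pullback and $\mathrm{Ind}^V_U$ postcomposition. A full $\mathcal T$-subcategory assigns isomorphism-closed classes $\mathcal C_V\subseteq\mathrm{Ob}\,\mathbb F_V$ stable under restriction. For $S\in\mathbb F_V$ with orbits $U$ and $T_U\in\mathbb F_U$, $\coprod_U^ST_U:=\coprod_U\mathrm{Ind}_U^VT_U$. A $\mathcal T$-weak indexing system is a full $\mathcal T$-subcategory with $\mathcal C_V\neq\emptyset\Rightarrow *_V\in\mathcal C_V$ and closed under $\coprod^S_UT_U$ for $S\in\mathcal C_V$, $T_U\in\mathcal C_U$; these form a lattice under inclusion with join $\vee$. It is unital if every $\mathcal C_V$ is nonempty and $S\sqcup S'\in\mathcal C_V\Rightarrow S,S'\in\mathcal C_V$. $\nabla(\mathcal C)=\{V\in\mathcal T\mid 2\cdot *_V\in\mathcal C_V\}$. *)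

(* Defs.v *)
From mathcomp Require Import all_boot.

Set Implicit Arguments.
Unset Strict Implicit.
Unset Printing Implicit Defensive.

Record Cat := {
  Ob :> Type;
  Hom : Ob -> Ob -> Type;
  idm : forall a, Hom a a;
  comp : forall a b c, Hom b c -> Hom a b -> Hom a c;
  comp1m : forall a b (f : Hom a b), comp (idm b) f = f;
  compm1 : forall a b (f : Hom a b), comp f (idm a) = f;
  compA : forall a b c d (h : Hom c d) (g : Hom b c) (f : Hom a b),
      comp h (comp g f) = comp (comp h g) f
}.
Arguments Hom {C} : rename.
Arguments idm {C} : rename.
Arguments comp {C a b c} : rename.

Section FT.
Variable T : Cat.

(* F_T : finite coproducts of representables in Fun(T^op, Set),       *)
(* presented as finite families of objects of T.  A morphism          *)
(*   coprod_i y(U_i) -> coprod_j y(V_j)                                *)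
(* is (Yoneda, coproducts pointwise) a choice for each i of an index  *)
(* j and a morphism U_i -> V_j in T.                                   *)
Record FObj := { fidx : finType; fob : fidx -> Ob T }.
Arguments fob : clear implicits.

Record FHom (X Y : FObj) := {
  fimap : fidx X -> fidx Y;
  fmap : forall i, Hom (fob X i) (fob Y (fimap i)) }.
Arguments fimap {X Y}.
Arguments fmap {X Y}.

Definition feq (X Y : FObj) (f g : FHom X Y) : Prop :=
  forall i, existT (fun j => Hom (fob X i) (fob Y j)) (fimap f i) (fmap f i)
          = existT (fun j => Hom (fob X i) (fob Y j)) (fimap g i) (fmap g i).

Definition fcomp (X Y Z : FObj) (g : FHom Y Z) (f : FHom X Y) : FHom X Z :=
  {| fimap := fun i => fimap g (fimap f i);
     fmap := fun i => comp (fmap g (fimap f i)) (fmap f i) |}.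

Definition fid (X : FObj) : FHom X X :=
  {| fimap := fun i => i; fmap := fun i => idm (fob X i) |}.

Definition is_pullback (X Y Z P : FObj) (f : FHom X Z) (g : FHom Y Z)
    (p1 : FHom P X) (p2 : FHom P Y) : Prop :=
  feq (fcomp f p1) (fcomp g p2) /\
  forall (Q : FObj) (q1 : FHom Q X) (q2 : FHom Q Y),
    feq (fcomp f q1) (fcomp g q2) ->
    exists h : FHom Q P, feq (fcomp p1 h) q1 /\ feq (fcomp p2 h) q2 /\
      forall h' : FHom Q P, feq (fcomp p1 h') q1 -> feq (fcomp p2 h') q2 ->
        feq h' h.

Definition orbital : Prop :=
  forall (X Y Z : FObj) (f : FHom X Z) (g : FHom Y Z),
    exists (P : FObj) (p1 : FHom P X) (p2 : FHom P Y), is_pullback f g p1 p2.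

Definition atomic : Prop :=
  forall (U V : Ob T) (f : Hom U V),
    (exists s : Hom V U, comp f s = idm V) ->
    exists g : Hom V U, comp f g = idm V /\ comp g f = idm U.

Definition rep (V : Ob T) : FObj := {| fidx := unit; fob := fun _ => V |}.

Definition repHom (U V : Ob T) (f : Hom U V) : FHom (rep U) (rep V) :=
  @Build_FHom (rep U) (rep V) (fun i => i) (fun _ => f).

(* F_V = F_{T,/V}: objects of F_T together with a map to y(V).        *)
Record SObj (V : Ob T) := {
  sidx : finType;
  sob : sidx -> Ob T;
  sproj : forall i, Hom (sob i) V }.
Arguments sidx {V}.
Arguments sob {V}.
Arguments sproj {V}.

Definition toF (V : Ob T) (S : SObj V) : FObj := {| fidx := sidx S; fob := sob S |}.

Definition sprojF (V : Ob T) (S : SObj V) : FHom (toF S) (rep V) :=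
  @Build_FHom (toF S) (rep V) (fun _ => tt) (sproj S).

Definition sliceOf (U : Ob T) (P : FObj) (p : FHom P (rep U)) : SObj U :=
  {| sidx := fidx P; sob := fob P; sproj := fmap p |}.

Definition siso (V : Ob T) (S S' : SObj V) : Prop :=
  exists (h : FHom (toF S) (toF S')) (k : FHom (toF S') (toF S)),
    [/\ feq (fcomp (sprojF S') h) (sprojF S),
        feq (fcomp (sprojF S) k) (sprojF S'),
        feq (fcomp k h) (fid _) & feq (fcomp h k) (fid _)].

Definition star (V : Ob T) : SObj V :=
  {| sidx := unit; sob := fun _ => V; sproj := fun _ => idm V |}.

Definition sdisj (V : Ob T) (S S' : SObj V) : SObj V :=
  let ob := fun x : (sidx S + sidx S')%type =>
              match x with inl i => sob S i | inr j => sob S' j end in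
  {| sidx := (sidx S + sidx S')%type;
     sob := ob;
     sproj := fun x => match x return Hom (ob x) V with
                       | inl i => sproj S i | inr j => sproj S' j end |}.

Definition two_star (V : Ob T) : SObj V := sdisj (star V) (star V).

(* \coprod^S_U T_U := \coprod_U Ind^V_U T_U, U ranging over the orbits
   (summands) of S, Ind^V_U = postcomposition with U -> V *)
Definition scoprod (V : Ob T) (S : SObj V) (Tf : forall i : sidx S, SObj (sob S i))
  : SObj V :=
  {| sidx := {i : sidx S & sidx (Tf i)};
     sob := fun x => sob (Tf (tag x)) (tagged x);
     sproj := fun x => comp (sproj S (tag x)) (sproj (Tf (tag x)) (tagged x)) |}.

Definition TClass := forall V : Ob T, SObj V -> Prop.

Definition iso_closed (C : TClass) : Prop :=
  forall V (S S' : SObj V), siso S S' -> C V S -> C V S'.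

Definition res_stable (C : TClass) : Prop :=
  forall (U V : Ob T) (f : Hom U V) (S : SObj V)
         (P : FObj) (p1 : FHom P (toF S)) (p2 : FHom P (rep U)),
    is_pullback (sprojF S) (repHom f) p1 p2 -> C V S -> C U (sliceOf p2).

Definition full_Tsubcat (C : TClass) : Prop := iso_closed C /\ res_stable C.

Definition is_wis (C : TClass) : Prop :=
  [/\ full_Tsubcat C,
      (forall V, (exists S, C V S) -> C V (star V)) &
      (forall V (S : SObj V) (Tf : forall i : sidx S, SObj (sob S i)),
          C V S -> (forall i, C (sob S i) (Tf i)) -> C V (scoprod Tf))].

Definition unital_wis (C : TClass) : Prop :=
  [/\ is_wis C,
      (forall V, exists S, C V S) &
      (forall V (S S' : SObj V), C V (sdisj S S') -> C V S /\ C V S')].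

(* join in the lattice of weak indexing systems (ordered by inclusion):
   the intersection of all weak indexing systems containing C and D *)
Definition wis_join (C D : TClass) : TClass :=
  fun V S => forall E : TClass, is_wis E ->
    (forall W X, C W X -> E W X) -> (forall W X, D W X -> E W X) -> E V S.

Definition nabla (C : TClass) : Ob T -> Prop := fun V => C V (two_star V).

End FT.

(* Main.v *)
Require Import Defs.
From mathcomp Require Import all_boot.
Require Import Defs.
From Stdlib Require Import Classical Eqdep_dec.
Set Implicit Arguments. Unset Strict Implicit. Unset Printing Implicit Defensive.

Section Basic.
Variable T : Cat.
Hypothesis hatom : atomic T.

Lemma sec_inv (U V : Ob T) (f : Hom U V) (a : Hom V U) :
  comp f a = idm V -> comp a f = idm U.
Proof.
move=> fa; have [g [fg gf]] := hatom (ex_intro _ a fa).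
have ag : a = g by rewrite -[g]compm1 -fa compA gf comp1m.
by rewrite ag.
Qed.

Lemma sec_uniq (U V : Ob T) (f : Hom U V) (a1 a2 : Hom V U) :
  comp f a1 = idm V -> comp f a2 = idm V -> a1 = a2.
Proof.
move=> h1 h2; have := sec_inv h1 => g1.
by rewrite -[a2]comp1m -g1 -compA h2 compm1.
Qed.

Definition decb (b : bool) : {b = true} + {b = false} :=
  match b as b0 return {b0 = true} + {b0 = false} with
  | true => left erefl | false => right erefl end.

Section Two.
Variable V : Ob T.
Variable S : SObj V.
Variables i j : sidx S.
Hypothesis ij : i != j.
Variable a : Hom V (sob (s:=S) i).
Variable b : Hom V (sob (s:=S) j).
Hypothesis ha : comp (sproj (s:=S) i) a = idm V.
Hypothesis hb : comp (sproj (s:=S) j) b = idm V.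

Definition pp (k : sidx S) := (k != i) && (k != j).

Definition restrS : SObj V :=
  {| sidx := {k : sidx S | pp k}; sob := fun r => sob (s:=S) (val r);
     sproj := fun r => sproj (s:=S) (val r) |}.

Definition S' : SObj V := sdisj (two_star V) restrS.

Definition h0 (k : sidx S) : {y : sidx S' & Hom (sob (s:=S) k) (sob (s:=S') y)} :=
  match decb (pp k) with
  | left e => existT _ (inr (exist _ k e)) (idm (sob (s:=S) k))
  | right _ => if k == i then existT (fun y => Hom (sob (s:=S) k) (sob (s:=S') y)) (inl (inl tt)) (sproj (s:=S) k)
               else existT (fun y => Hom (sob (s:=S) k) (sob (s:=S') y)) (inl (inr tt)) (sproj (s:=S) k)
  end.

Definition hmap : FHom (toF S) (toF S') :=
  @Build_FHom _ (toF S) (toF S') (fun k => projT1 (h0 k)) (fun k => projT2 (h0 k)).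

Definition kf (y : sidx S') : sidx S :=
  match y with inl (inl _) => i | inl (inr _) => j | inr r => val r end.

Definition kmap : FHom (toF S') (toF S) :=
  @Build_FHom _ (toF S') (toF S) kf
   (fun y => match y as y0 return Hom (sob (s:=S') y0) (sob (s:=S) (kf y0)) with
     | inl (inl _) => a | inl (inr _) => b | inr r => idm _ end).

Lemma siso_two : siso S S'.
Proof.
exists hmap, kmap; split.
- move=> k /=; rewrite /h0; case: (decb (pp k)) => e /=.
    by rewrite compm1.
  by case: (k == i) => /=; rewrite comp1m.
- by case=> [[[]|[]]|r] /=; rewrite ?ha ?hb ?compm1.
- move=> k /=; rewrite /h0; case: (decb (pp k)) => e /=.
    by rewrite comp1m.
  case: eqP => [ki|nki] /=.
    by subst k; rewrite (sec_inv ha).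
  have kj : k = j.
    by apply/eqP; move: e; rewrite /pp; move/eqP: nki => ->; case: eqP.
  by subst k; rewrite (sec_inv hb).
- case=> [[[]|[]]|[k e0]] /=; rewrite /h0.
  + case: (decb (pp i)) => e; first by exfalso; move: e; rewrite /pp eqxx.
    by rewrite eqxx /= ha.
  + case: (decb (pp j)) => e; first by exfalso; move: e; rewrite /pp eqxx andbF.
    by rewrite eq_sym (negbTE ij) /= hb.
  + case: (decb (pp k)) => e; last by exfalso; move: e0; rewrite e.
    by rewrite /= comp1m (bool_irrelevance e e0).
Qed.

End Two.

Lemma two_of_secs (C : TClass T) (hC : unital_wis C) V (S : SObj V) (i j : sidx S)
  (a : Hom V (sob (s:=S) i)) (b : Hom V (sob (s:=S) j)) :
  i != j -> comp (sproj (s:=S) i) a = idm V -> comp (sproj (s:=S) j) b = idm V ->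
  C V S -> C V (two_star V).
Proof.
move=> ij ha hb CS; case: hC => [[[iso _] _ _] _ split].
have := iso _ _ _ (siso_two ij ha hb) CS.
by case/split.
Qed.


Lemma existT_unit_inj (B : Type) (u u' : unit) (b b' : B) :
  existT (fun _ : unit => B) u b = existT (fun _ : unit => B) u' b' -> b = b'.
Proof. exact: (f_equal (fun z : {x : unit & B} => projT2 z)). Qed.

Lemma existT_unit_eq (B : Type) (u u' : unit) (b b' : B) :
  b = b' -> existT (fun _ : unit => B) u b = existT (fun _ : unit => B) u' b'.
Proof. by case: u; case: u' => ->. Qed.

Lemma postcomp (I : Type) (Y : I -> Ob T) (W X : Ob T) (j1 j2 : I)
  (u1 : Hom X (Y j1)) (u2 : Hom X (Y j2)) (a : Hom W X) :
  existT (fun j => Hom X (Y j)) j1 u1 = existT (fun j => Hom X (Y j)) j2 u2 ->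
  existT (fun j => Hom W (Y j)) j1 (comp u1 a) = existT (fun j => Hom W (Y j)) j2 (comp u2 a).
Proof. exact: (f_equal (fun z => existT (fun j => Hom W (Y j)) (projT1 z) (comp (projT2 z) a))). Qed.

Definition liftH (W : Ob T) (X : FObj T) (k : fidx X) (a : Hom W (fob (f:=X) k)) : FHom (rep W) X :=
  @Build_FHom _ (rep W) X (fun _ => k) (fun _ => a).

Hypothesis horb : orbital T.

Lemma restrict_two (C : TClass T) (hC : unital_wis C) U (S : SObj U) W (g : Hom W U)
  k1 (a1 : Hom W (sob (s:=S) k1)) k2 (a2 : Hom W (sob (s:=S) k2)) :
  comp (sproj (s:=S) k1) a1 = g -> comp (sproj (s:=S) k2) a2 = g ->
  existT (fun k => Hom W (sob (s:=S) k)) k1 a1 <> existT _ k2 a2 ->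
  C U S -> C W (two_star W).
Proof.
move=> e1 e2 ne CS.
have [P [p1 [p2 [comm univ]]]] := horb (sprojF S) (repHom g).
have hC' := hC; case: hC' => [[[_ res] _ _] _ _].
have CP : C W (sliceOf p2) := res _ _ g S P p1 p2 (conj comm univ) CS.
have f1 : feq (fcomp (sprojF S) (liftH (X:=toF S) a1)) (fcomp (repHom g) (fid (rep W))).
  by case=> /=; rewrite e1 compm1.
have f2 : feq (fcomp (sprojF S) (liftH (X:=toF S) a2)) (fcomp (repHom g) (fid (rep W))).
  by case=> /=; rewrite e2 compm1.
have [h1 [h1p1 [h1p2 _]]] := univ _ _ _ f1.
have [h2 [h2p1 [h2p2 _]]] := univ _ _ _ f2.
have s1 : comp (fmap p2 (fimap h1 tt)) (fmap h1 tt) = idm W.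
  exact: (existT_unit_inj (B := Hom W W) (h1p2 tt)).
have s2 : comp (fmap p2 (fimap h2 tt)) (fmap h2 tt) = idm W.
  exact: (existT_unit_inj (B := Hom W W) (h2p2 tt)).
have sameX : forall (m m' : fidx P) (x : Hom W (fob (f:=P) m)) (x' : Hom W (fob (f:=P) m')),
    m = m' -> comp (fmap p2 m) x = idm W -> comp (fmap p2 m') x' = idm W ->
    existT (fun m => Hom W (fob (f:=P) m)) m x = existT _ m' x'.
  move=> m m' x x' E; subst m' => t1 t2; by rewrite (sec_uniq t1 t2).
have neq : fimap h1 tt != fimap h2 tt.
  apply/eqP => m12; apply: ne.
  apply: (etrans (esym (h1p1 tt))); apply: (etrans _ (h2p1 tt)).
  exact: (f_equal (fun z : {m : fidx P & Hom W (fob (f:=P) m)} =>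
     existT (fun k => Hom W (fob (f:=toF S) k)) (fimap p1 (projT1 z)) (comp (fmap p1 (projT1 z)) (projT2 z)))
     (sameX _ _ _ _ m12 s1 s2)).
exact: (two_of_secs hC (S := sliceOf p2) neq s1 s2 CP).
Qed.

End Basic.

Section Main.
Variable T : Cat.
Hypothesis horb : orbital T.
Hypothesis hatom : atomic T.
Variables C D : TClass T.

Definition NN (W : Ob T) : Prop := exists U (f : Hom W U), nabla C U \/ nabla D U.

Lemma NN_down (U W : Ob T) (f : Hom W U) : NN U -> NN W.
Proof. by case=> Z [h H]; exists Z, (comp h f). Qed.

Definition Pl (V : Ob T) (S : SObj V) : Prop :=
  forall W (g : Hom W V) k1 (a1 : Hom W (sob (s:=S) k1)) k2 (a2 : Hom W (sob (s:=S) k2)),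
    ~ NN W -> comp (sproj (s:=S) k1) a1 = g -> comp (sproj (s:=S) k2) a2 = g ->
    existT (fun k => Hom W (sob (s:=S) k)) k1 a1 = existT _ k2 a2.

Definition EE : TClass T := fun V S => NN V \/ Pl S.

Lemma EE_wis : is_wis EE.
Proof.
split; [split|..].
- move=> V S S' [h [k [hs ks kh hk]]] [NV|PS]; [by left|right].
  move=> W g i1 a1 i2 a2 nW e1 e2.
  have L : forall i (a : Hom W (sob (s:=S') i)), comp (sproj (s:=S') i) a = g ->
      comp (sproj (s:=S) (fimap k i)) (comp (fmap k i) a) = g.
    move=> i a e; rewrite compA.
    have E := existT_unit_inj (B := Hom (sob (s:=S') i) V) (ks i); simpl in E; by rewrite E.
  have Eq := PS W g _ _ _ _ nW (L _ _ e1) (L _ _ e2).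
  have H1 := postcomp a1 (hk i1); rewrite /= comp1m -compA in H1.
  have H2 := postcomp a2 (hk i2); rewrite /= comp1m -compA in H2.
  apply: (etrans (esym H1)); apply: (etrans _ H2).
  exact: (f_equal (fun z : {m : sidx S & Hom W (sob (s:=S) m)} =>
     existT (fun y => Hom W (sob (s:=S') y)) (fimap h (projT1 z)) (comp (fmap h (projT1 z)) (projT2 z))) Eq).
- move=> U V f S P p1 p2 [comm univ] [NV|PS]; first by left; exact: NN_down NV.
  right=> W g m1 x1 m2 x2 nW /= e1 e2.
  have L : forall m (x : Hom W (fob (f:=P) m)), comp (fmap p2 m) x = g ->
     comp (sproj (s:=S) (fimap p1 m)) (comp (fmap p1 m) x) = comp f g.
    move=> m x e; rewrite compA.
    have E := existT_unit_inj (B := Hom (fob (f:=P) m) V) (comm m); simpl in E; by rewrite E -compA e.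
  have Eq := PS W (comp f g) _ _ _ _ nW (L _ _ e1) (L _ _ e2).
  have fq : feq (fcomp (sprojF S) (liftH (X:=toF S) (comp (fmap p1 m1) x1)))
                (fcomp (repHom f) (liftH (X:=rep U) (k:=tt) g)).
    by case=> /=; rewrite (L _ _ e1).
  have [h [_ [_ uniq]]] := univ _ _ _ fq.
  have u1 := uniq (liftH (X:=P) x1) (fun _ => erefl) (fun _ => existT_unit_eq (B := Hom W U) _ _ e1).
  have u2 := uniq (liftH (X:=P) x2) (fun _ => esym Eq) (fun _ => existT_unit_eq (B := Hom W U) _ _ e2).
  exact: (etrans (u1 tt) (esym (u2 tt))).
- move=> V _; right=> W g [] a1 [] a2 _ /=; rewrite !comp1m => -> ->. by [].
- move=> V S Tf [NV|PS] HT; first by left.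
  right=> W g [k1 t1] a1 [k2 t2] a2 nW /= e1 e2.
  have Eq := PS W g k1 (comp (sproj t1) a1) k2 (comp (sproj t2) a2) nW
     (etrans (compA _ _ _) e1) (etrans (compA _ _ _) e2).
  have k12 := f_equal (fun z : {m : sidx S & Hom W (sob (s:=S) m)} => projT1 z) Eq.
  simpl in k12; subst k2.
  have y := Eqdep_dec.inj_pair2_eq_dec _ (fun x y => eq_comparable x y) _ _ _ _ Eq.
  case: (HT k1) => [NU|PT]; first by case: nW; exact: (NN_down (comp (sproj (s:=Tf k1) t1) a1) NU).
  have Eq2 := PT W _ t1 a1 t2 a2 nW erefl (esym y).
  exact: (f_equal (fun z : {m : sidx (Tf k1) & Hom W (sob (s:=Tf k1) m)} =>
     existT (fun x : {i : sidx S & sidx (Tf i)} => Hom W (sob (s:=Tf (tag x)) (tagged x)))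
        (existT _ k1 (projT1 z)) (projT2 z)) Eq2).
Qed.

Hypothesis hC : unital_wis C.
Hypothesis hD : unital_wis D.

Lemma incl (X : TClass T) (hX : unital_wis X) (HX : forall U, nabla X U -> NN U) :
  forall W S, X W S -> @EE W S.
Proof.
move=> V S XS; right=> W g k1 a1 k2 a2 nW e1 e2.
case: (classic (existT (fun k => Hom W (sob (s:=S) k)) k1 a1 = existT _ k2 a2)) => // ne.
case: nW; apply: HX; exact: (restrict_two hatom horb hX e1 e2 ne XS).
Qed.

Lemma main V : nabla (wis_join C D) V <-> nabla C V \/ nabla D V.
Proof.
split; last first.
  by case=> H E _ iC iD; [apply: iC | apply: iD].
move=> HJ.
have EV := HJ EE EE_wis (incl hC (fun U h => ex_intro _ U (ex_intro _ (idm U) (or_introl h))))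
                        (incl hD (fun U h => ex_intro _ U (ex_intro _ (idm U) (or_intror h)))).
have two_ne : forall U : Ob T, existT (fun k => Hom U (sob (s:=two_star U) k)) (inl tt) (idm U)
                   <> existT _ (inr tt) (idm U).
  by move=> U /(f_equal (fun z : {k : sidx (two_star U) & Hom U (sob (s:=two_star U) k)} => projT1 z)).
case: (classic (NN V)) => [[U [f [CU|DU]]]|nNV].
- left; apply: (restrict_two hatom horb hC (S := two_star U) (g := f) (k1 := inl tt) (a1 := f) (k2 := inr tt) (a2 := f)); rewrite /= ?comp1m //;
  try by move/(f_equal (fun z : {k : sidx (two_star U) & Hom V (sob (s:=two_star U) k)} => projT1 z)).
- right; apply: (restrict_two hatom horb hD (S := two_star U) (g := f) (k1 := inl tt) (a1 := f) (k2 := inr tt) (a2 := f)); rewrite /= ?comp1m //;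
  try by move/(f_equal (fun z : {k : sidx (two_star U) & Hom V (sob (s:=two_star U) k)} => projT1 z)).
- case: EV => [//|PV]; exfalso.
  apply: (two_ne V); apply: (PV V (idm V)) => //=; exact: comp1m.
Qed.

End Main.

Theorem mainTheorem17 (T : Cat) (horb : orbital T) (hatom : atomic T)
  (C D : TClass T) (hC : unital_wis C) (hD : unital_wis D) :
  forall V : Ob T, nabla (wis_join C D) V <-> nabla C V \/ nabla D V.
Proof. exact: main. Qed.
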